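(* Let $\Phi$ be a Markov Logic Network and $n,m$ positive integers. Then $$M_{min}\, C_{n,m}\, Z(n)\,Z(m) \leq Z(n+m) \leq Z(n)\,Z(m)\,C_{n,m}\, M_{max},$$ where $M_{max} = \prod_{k \in [d]} (w^{max}_{k})^{ \binom{n+m}{k} - \binom{n}{k} - \binom{m}{k}}$ and $M_{min} = \prod_{k \in [d]} (w^{min}_{k})^{ \binom{n+m}{k} - \binom{n}{k} - \binom{m}{k}}$, and $C_{n,m}$ is the number of ways in which an interpretation on $[n]$ and an interpretation on $\{n+1,\dots,n+m\}$ can be extended to an interpretation on $[n+m]$.
   Context: Fix a finite function-free relational first-order signature $\mathcal{R}$. For a positive integer $N$ write $[N]=\{1,\dots,N\}$. For a finite set $D$ of constants, a ground atom over $D$ is $R(a_1,\dots,a_r)$ with $R\in\mathcal{R}$ of arity $r$ and $a_1,\dots,a_r\in D$. An interpretation on $D$ is a map assigning true/false to every ground atom over $D$; $\Omega^{(N)}$ is the set of interpretations on $[N]$. For an interpretation $\omega$ on $D$ and $I\subseteq D$, $\omega\downarrow I$ is the restriction of $\omega$ to the ground atoms all of whose arguments lie in $I$. The number $C_{n,m}$ of interpretations $\omega$ on $[n+m]$ with $\omega\downarrow[n]=\omega'$ and $\omega\downarrow\{n+1,\dots,n+m\}=\omega''$ is the same for every pair $(\omega',\omega'')$ (it equals $2$ to the number of ground atoms over $[n+m]$ having arguments in both $[n]$ and $\{n+1,\dots,n+m\}$). A Markov Logic Network (MLN) $\Phi$ is a finite set of pairs $(\phi_i,a_i)$, where $\phi_i$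 is a function-free, quantifier-free first-order formula over $\mathcal{R}$ and $a_i\in\mathbb{R}$. The arity of $\phi_i$ is the number of distinct variables in it; $\Phi_k$ is the set of pairs whose formula has arity $k$; $d$ is the largest arity. Convention: a formula with $k$ variables is grounded only by substituting $k$ pairwise distinct constants for its variables; for an interpretation $\omega$ on a finite set $D$, $N(\phi,\omega)$ is the number of injective assignments of the variables of $\phi$ to elements of $D$ under which $\phi$ is true in $\omega$. The weight of an interpretation $\omega$ is $w(\omega)=\exp\bigl(\sum_{(\phi_i,a_i)\in\Phi}a_iN(\phi_i,\omega)\bigr)$ and its $k$-weight is $w_k(\omega)=\exp\bigl(\sum_{(\phi_i,a_i)\in\Phi_k}a_iN(\phi_i,\omega)\bigr)$. $w_k^{max}$ and $w_k^{min}$ denote the maximum and minimum of $w_k(\omega')$ over all interpretations $\omega'$ on a $k$-element domain. The partition function is $Z(N)=\sum_{\omega\in\Omega^{(N)}}w(\omega)$. Binomial coefficients $\binom{a}{k}$ with $k>a$ are $0$. *)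

(* Defs.v *)
From HB Require Import structures.
From mathcomp Require Import all_boot all_order all_algebra.
From mathcomp Require Import reals.
From mathcomp.analysis Require Import sequences exp.
Set Implicit Arguments. Unset Strict Implicit. Unset Printing Implicit Defensive.
Import Order.TTheory GRing.Theory Num.Theory.
Local Open Scope ring_scope.

Section MLN.
Variables (Rel : finType) (ar : Rel -> nat).

Inductive formula : Type :=
| FAtom (r : Rel) (t : (ar r).-tuple nat)
| FEq (x y : nat)
| FNot (f : formula)
| FAnd (f g : formula)
| FOr (f g : formula).

Fixpoint fvars (f : formula) : seq nat :=
  match f with
  | FAtom _ t => tval t
  | FEq x y => [:: x; y]
  | FNot f => fvars f
  | FAnd f g => fvars f ++ fvars g
  | FOr f g => fvars f ++ fvars g
  end.

Definition vars (f : formula) : seq nat := undup (fvars f).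
Definition arity (f : formula) : nat := size (vars f).

Definition atom (D : finType) := {r : Rel & (ar r).-tuple D}.
Definition interp (D : finType) := {ffun atom D -> bool}.

(** truth of an atom whose arguments are given as options (None never occurs
    for the assignments used below) *)
Definition holds_opt (D : finType) (w : interp D) (r : Rel)
    (t : (ar r).-tuple (option D)) : bool :=
  match [pick u : (ar r).-tuple D | map_tuple Some u == t] with
  | Some u => w (Tagged (fun r => (ar r).-tuple D) u)
  | None => false
  end.

Fixpoint eval (D : finType) (w : interp D) (rho : nat -> option D)
    (f : formula) : bool :=
  match f with
  | FAtom r t => holds_opt w (map_tuple rho t)
  | FEq x y => rho x == rho y
  | FNot f => ~~ eval w rho f
  | FAnd f g => eval w rho f && eval w rho g
  | FOr f g => eval w rho f || eval w rho g
  end.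

Definition Ngr (D : finType) (f : formula) (w : interp D) : nat :=
  #|[set s : {ffun 'I_(arity f) -> D} |
      injectiveb s &&
      eval w (fun x => omap s (insub (index x (vars f)))) f]|.

Variable R : realType.

Definition mln := seq (formula * R).

Definition weight (Phi : mln) (D : finType) (w : interp D) : R :=
  expR (\sum_(p <- Phi) p.2 * (Ngr p.1 w)%:R).

Definition kweight (Phi : mln) (k : nat) (D : finType) (w : interp D) : R :=
  expR (\sum_(p <- Phi | arity p.1 == k) p.2 * (Ngr p.1 w)%:R).

Definition maxarity (Phi : mln) : nat := \max_(p <- Phi) arity p.1.

Definition false_interp (D : finType) : interp D := [ffun => false].

Definition wmax (Phi : mln) (k : nat) : R :=
  \big[Num.max/kweight Phi k (false_interp 'I_k)]_(w : interp 'I_k)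
     kweight Phi k w.
Definition wmin (Phi : mln) (k : nat) : R :=
  \big[Num.min/kweight Phi k (false_interp 'I_k)]_(w : interp 'I_k)
     kweight Phi k w.

Definition Z (Phi : mln) (N : nat) : R := \sum_(w : interp 'I_N) weight Phi w.

Definition map_atom (D D' : finType) (g : D -> D') (a : atom D) : atom D' :=
  Tagged (fun r => (ar r).-tuple D') (map_tuple g (tagged a)).
Definition restr (D D' : finType) (g : D -> D') (w : interp D') : interp D :=
  [ffun a => w (map_atom g a)].

(** number of interpretations on [n+m] extending w1 on [n] (the first n
    elements) and w2 on {n+1..n+m} (identified with [m] by the shift) *)
Definition Cext (n m : nat) (w1 : interp 'I_n) (w2 : interp 'I_m) : nat :=
  #|[set w : interp 'I_(n + m) |
      (restr (@lshift n m) w == w1) && (restr (@rshift n m) w == w2)]|.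

Definition Mfac (c : nat -> R) (n m d : nat) : R :=
  \prod_(1 <= k < d.+1) c k ^+ ('C(n + m, k) - 'C(n, k) - 'C(m, k)).

End MLN.

(* Main.v *)
Require Import Defs.
From HB Require Import structures.
From mathcomp Require Import all_boot all_order all_algebra.
From mathcomp Require Import reals.
From mathcomp.analysis Require Import sequences exp.
From mathcomp Require Import zify ring.
From Stdlib Require Import Eqdep_dec.
Import Order.TTheory GRing.Theory Num.Theory.
Local Open Scope ring_scope.
Set Implicit Arguments. Unset Strict Implicit. Unset Printing Implicit Defensive.

Section Aux.
Variables (Rel : finType) (ar : Rel -> nat).
Hypothesis har : forall r : Rel, (0 < ar r)%N.
Local Open Scope nat_scope.

Lemma arity_pos (f : formula ar) : (0 < arity f)%N.
Proof.
have [x Hx] : exists x, x \in fvars f.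
  elim: f => [r t|x y|f IH|f IHf g IHg|f IHf g IHg] /=.
  - by exists (tnth t (Ordinal (har r))); apply: mem_tnth.
  - by exists x; rewrite mem_head.
  - exact: IH.
  - by case: IHf => x Hx; exists x; rewrite mem_cat Hx.
  - by case: IHf => x Hx; exists x; rewrite mem_cat Hx.
rewrite /arity /vars; case E: (undup (fvars f)) => [|y s] //.
by move: Hx; rewrite -mem_undup E.
Qed.

Lemma insub_fvars (f : formula ar) x : x \in fvars f ->
  exists i : 'I_(arity f), insub (index x (vars f)) = Some i.
Proof.
move=> Hx; have Hlt : (index x (vars f) < arity f)%N.
  by rewrite /arity index_mem /vars mem_undup.
by exists (Ordinal Hlt); rewrite insubT; congr Some; apply: val_inj.
Qed.

Lemma holds_some (D : finType) (w : interp ar D) r (u : (ar r).-tuple D) :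
  holds_opt w (map_tuple Some u) = w (Tagged (fun r => (ar r).-tuple D) u).
Proof.
rewrite /holds_opt; case: pickP => [v /eqP Hv | H].
  have -> : v = u => //; apply: val_inj; have := congr1 val Hv => /=.
  by apply: inj_map => a b [].
by have := H u; rewrite eqxx.
Qed.

Lemma eval_ext (D : finType) (w : interp ar D) rho1 rho2 (f : formula ar) :
  rho1 =1 rho2 -> eval w rho1 f = eval w rho2 f.
Proof.
move=> E; elim: f => [r t|x y|f IH|f IHf g IHg|f IHf g IHg] /=.
- by congr holds_opt; apply: val_inj => /=; apply: eq_map.
- by rewrite !E.
- by rewrite IH.
- by rewrite IHf IHg.
- by rewrite IHf IHg.
Qed.

Lemma eval_restr (D D' : finType) (g : D -> D') (ginj : injective g)
   (w : interp ar D') (f : formula ar) rho (sig : nat -> D) :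
  (forall x, x \in fvars f -> rho x = Some (sig x)) ->
  eval (restr g w) rho f = eval w (fun x => omap g (rho x)) f.
Proof.
elim: f => [r t|x y|f IH|f IHf g' IHg|f IHf g' IHg] /= H.
- have -> : map_tuple rho t = map_tuple Some (map_tuple sig t).
    apply: val_inj => /=; rewrite -map_comp; apply/eq_in_map => x Hx.
    by rewrite H.
  have -> : map_tuple (fun x => omap g (rho x)) t
         = map_tuple Some (map_tuple (g \o sig) t).
    apply: val_inj => /=; rewrite -map_comp; apply/eq_in_map => x Hx.
    by rewrite /= H.
  rewrite !holds_some /restr ffunE /map_atom /=; congr (w (Tagged _ _)).
  by apply: val_inj => /=; rewrite -map_comp.
- rewrite !H ?inE ?eqxx ?orbT //. by apply/eqP/eqP => [[->]|[/ginj ->]].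

- by rewrite IH.
- by rewrite IHf ?IHg // => x Hx; apply: H; rewrite mem_cat Hx ?orbT.
- by rewrite IHf ?IHg // => x Hx; apply: H; rewrite mem_cat Hx ?orbT.
Qed.


Definition rhoF (f : formula ar) (D : finType) (s : {ffun 'I_(arity f) -> D}) :=
  fun x => omap s (insub (index x (vars f))).
Definition img (f : formula ar) (D : finType) (s : {ffun 'I_(arity f) -> D})
  : {set D} := [set s i | i : 'I_(arity f)].
Definition cnt (D : finType) (w : interp ar D) (f : formula ar)
  (P : pred {set D}) : nat :=
  #|[set s : {ffun 'I_(arity f) -> D} |
      [&& injectiveb s, P (img s) & eval w (rhoF s) f]]|.

Lemma card_img (f : formula ar) (D : finType) (s : {ffun 'I_(arity f) -> D}) :
  injectiveb s -> #|img s| = arity f.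
Proof. by move/injectiveP=> si; rewrite card_imset // card_ord. Qed.

Lemma Ngr_cnt (D : finType) (w : interp ar D) (f : formula ar) :
  Ngr f w = cnt w f predT.
Proof. by apply: eq_card => s; rewrite !inE. Qed.

Lemma cnt_part (D : finType) (w : interp ar D) (f : formula ar) P :
  cnt w f P = \sum_(S : {set D} | P S && (#|S| == arity f)) cnt w f (xpred1 S).
Proof.
rewrite /cnt -sum1_card (partition_big (@img f D)
   (fun S => P S && (#|S| == arity f))).
  apply: eq_bigr => S /andP[PS cS]; rewrite -sum1_card; apply: eq_bigl => s.
  by rewrite !inE; case: (eqVneq (img s) S) => [->|_]; rewrite ?PS /= ?andbT ?andFb ?andbF.
by move=> s; rewrite inE => /and3P[si Pi _]; rewrite Pi card_img ?eqxx.
Qed.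

Lemma eval_comp (D D' : finType) (g : D -> D') (ginj : injective g)
   (w : interp ar D') (f : formula ar) (s : {ffun 'I_(arity f) -> D})
   (t : {ffun 'I_(arity f) -> D'}) :
  (forall i, t i = g (s i)) ->
  eval (restr g w) (rhoF s) f = eval w (rhoF t) f.
Proof.
move=> E; pose d0 := s (Ordinal (arity_pos f)).
rewrite (@eval_restr _ _ _ ginj w f (rhoF s) (fun x => odflt d0 (rhoF s x))).
  apply eval_ext => x; rewrite /rhoF; case: insub => //= i; by rewrite E.
by move=> x /insub_fvars [i Hi]; rewrite /rhoF Hi.
Qed.

Lemma cnt_embed (D D' : finType) (g : D -> D') (ginj : injective g)
   (w : interp ar D') (f : formula ar) :
  Ngr f (restr g w) = cnt w f (fun T => T \subset [set g x | x : D]).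
Proof.
rewrite /Ngr /cnt.
pose G := fun s : {ffun 'I_(arity f) -> D} => ([ffun i => g (s i)] : {ffun 'I_(arity f) -> D'}).
have Ginj : injective G.
  move=> s1 s2 E; apply/ffunP => i; apply: ginj.
  by have := congr1 (fun h : {ffun 'I_(arity f) -> D'} => h i) E; rewrite !ffunE.
rewrite -(card_imset _ Ginj); apply: eq_card => t.
apply/imsetP/idP.
  case=> s; rewrite inE => /andP[si ev] ->; rewrite inE; apply/and3P; split.
  - apply/injectiveP => i j; rewrite !ffunE => /ginj.
    by move/injectiveP: si; apply.
  - apply/subsetP => y /imsetP [i _ ->]; rewrite ffunE.
    by apply/imsetP; exists (s i).
  - by rewrite -(@eval_comp _ _ g ginj w f s) // => i; rewrite ffunE.
rewrite inE => /and3P [ti timg tev].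
have H i : t i \in codom g.
  have /subsetP /(_ (t i)) := timg.
  by rewrite imset_f // => /(_ isT) /imsetP [x _ ->]; apply: codom_f.
have Gt : G [ffun i => iinv (H i)] = t.
  by apply/ffunP => i; rewrite !ffunE f_iinv.
exists [ffun i => iinv (H i)] => //; rewrite inE; apply/andP; split.
  apply/injectiveP => i j; rewrite !ffunE => E; have := congr1 g E.
  by rewrite !f_iinv; move/injectiveP: ti; apply.
by rewrite (@eval_comp _ _ g ginj w f _ t) // => i; rewrite ffunE f_iinv.
Qed.

Lemma cnt_sub (D : finType) (w : interp ar D) (f : formula ar) (S : {set D}) :
  #|S| = arity f -> cnt w f (xpred1 S) = cnt w f (fun T => T \subset S).
Proof.
move=> cS; apply: eq_card => s; rewrite !inE.
case si: (injectiveb s) => //=.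
by rewrite eqEcard card_img // cS leqnn andbT.
Qed.

Lemma enum_val_range (D : finType) (S : {set D}) :
  [set (@enum_val _ (mem S)) i | i : 'I_#|S|] = S.
Proof.
apply/setP => x; apply/imsetP/idP.
  by case=> i _ ->; apply: enum_valP.
by move=> Hx; exists (enum_rank_in Hx x) => //; rewrite enum_rankK_in.
Qed.

End Aux.

Section Split.
Variables (Rel : finType) (ar : Rel -> nat).
Hypothesis har : forall r : Rel, (0 < ar r)%N.
Local Open Scope nat_scope.
Variables (n m : nat).

Definition Lset : {set 'I_(n + m)} := [set @lshift n m x | x : 'I_n].
Definition Rset : {set 'I_(n + m)} := [set @rshift n m x | x : 'I_m].
Definition mixed (S : {set 'I_(n + m)}) :=
  ~~ (S \subset Lset) && ~~ (S \subset Rset).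

Lemma LR_disj (S : {set 'I_(n + m)}) :
  S \subset Lset -> S \subset Rset -> S = set0.
Proof.
move=> /subsetP HL /subsetP HR; apply/setP => x; rewrite inE.
apply/negP => Hx; move: (HL x Hx) (HR x Hx) => /imsetP[i _ Ei] /imsetP[j _ Ej].
have := congr1 val Ei; rewrite Ej /=; have := ltn_ord i; lia.
Qed.

Lemma split_sum (F : {set 'I_(n + m)} -> nat) k : (0 < k)%N ->
  \sum_(S : {set 'I_(n + m)} | #|S| == k) F S =
  \sum_(S : {set 'I_(n + m)} | (S \subset Lset) && (#|S| == k)) F S +
  \sum_(S : {set 'I_(n + m)} | (S \subset Rset) && (#|S| == k)) F S +
  \sum_(S : {set 'I_(n + m)} | mixed S && (#|S| == k)) F S.
Proof.
move=> k0.
rewrite (bigID (fun S : {set 'I_(n + m)} => S \subset Lset)) /=.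
rewrite (bigID (fun S : {set 'I_(n + m)} => S \subset Rset) (fun S : {set 'I_(n + m)} => (#|S| == k) && ~~ (S \subset Lset))) /=.
rewrite addnA; congr (_ + _ + _).
- by apply: eq_bigl => S; rewrite andbC.
- apply: eq_bigl => S; rewrite /mixed.
  case HR: (S \subset Rset); case HL: (S \subset Lset);
    case Hk: (#|S| == k) => //=.
  by move: Hk; rewrite (LR_disj HL HR) cards0 => /eqP k0'; move: k0; rewrite -k0'.
- by apply: eq_bigl => S; rewrite /mixed; case: (S \subset Lset); case: (S \subset Rset); case: (#|S| == k).
Qed.

Lemma Ngr_split (w : interp ar 'I_(n + m)) (f : formula ar) :
  Ngr f w = Ngr f (restr (@lshift n m) w) + Ngr f (restr (@rshift n m) w)
   + \sum_(S : {set 'I_(n + m)} | mixed S && (#|S| == arity f))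
        Ngr f (restr (@enum_val _ (mem S)) w).
Proof.
rewrite Ngr_cnt cnt_part (split_sum _ (arity_pos har f)).
rewrite (cnt_embed har (@lshift_inj n m)) (cnt_embed har (@rshift_inj n m)).
rewrite (cnt_part _ _ (fun T => T \subset _)) (cnt_part _ _ (fun T => T \subset [set _ | x : 'I_m])).
congr (_ + _).
apply: eq_bigr => S /andP[_ /eqP cS].
rewrite (cnt_embed har enum_val_inj) enum_val_range cnt_sub //.
Qed.

End Split.

Section Weight.
Variables (Rel : finType) (ar : Rel -> nat).
Hypothesis har : forall r : Rel, (0 < ar r)%N.
Variables (R : realType) (Phi : mln ar R) (n m : nat).

Lemma weight_split (w : interp ar 'I_(n + m)) :
  weight Phi w = weight Phi (restr (@lshift n m) w) *
     weight Phi (restr (@rshift n m) w) *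
     \prod_(S : {set 'I_(n + m)} | mixed S)
        kweight Phi #|S| (restr (@enum_val _ (mem S)) w).
Proof.
rewrite /weight /kweight -expR_sum -!expRD; congr expR.
have E : forall p : formula ar * R, p.2 * (Ngr p.1 w)%:R =
   p.2 * (Ngr p.1 (restr (@lshift n m) w))%:R
   + p.2 * (Ngr p.1 (restr (@rshift n m) w))%:R
   + \sum_(S : {set 'I_(n + m)} | mixed S)
       (if arity p.1 == #|S| then
          p.2 * (Ngr p.1 (restr (@enum_val _ (mem S)) w))%:R else 0).
  move=> p; rewrite (Ngr_split har) !natrD natr_sum !mulrDr mulr_sumr.
  rewrite big_mkcondr /=; congr (_ + _); apply: eq_bigr => S _.
  by rewrite eq_sym; case: ifP; rewrite ?mulr0.
rewrite (eq_bigr _ (fun p _ => E p)) !big_split /=; congr (_ + _).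
rewrite exchange_big /=; apply: eq_bigr => S _.
by rewrite [RHS]big_mkcond.
Qed.


Lemma le_bigmax_gen (I : eqType) (s : seq I) (F : I -> R) x0 j :
  j \in s -> F j <= \big[Num.max/x0]_(i <- s) F i.
Proof.
elim: s => //= a s IH; rewrite inE big_cons => /orP[/eqP->|/IH H].
  by rewrite le_max lexx.
by rewrite le_max H orbT.
Qed.

Lemma ge_bigmin_gen (I : eqType) (s : seq I) (F : I -> R) x0 j :
  j \in s -> \big[Num.min/x0]_(i <- s) F i <= F j.
Proof.
elim: s => //= a s IH; rewrite inE big_cons => /orP[/eqP->|/IH H].
  by rewrite ge_min lexx.
by rewrite ge_min H orbT.
Qed.

Lemma kweight_le k (x : interp ar 'I_k) : kweight Phi k x <= wmax Phi k.
Proof. by apply: le_bigmax_gen; rewrite mem_index_enum. Qed.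

Lemma kweight_ge k (x : interp ar 'I_k) : wmin Phi k <= kweight Phi k x.
Proof. by apply: ge_bigmin_gen; rewrite mem_index_enum. Qed.

Lemma kweight_gt0 k (D : finType) (x : interp ar D) : 0 < kweight Phi k x.
Proof. exact: expR_gt0. Qed.

Lemma wmin_gt0 k : 0 < wmin Phi k.
Proof.
apply: (big_ind (fun x => 0 < x)) => [|x y hx hy|i _].
- exact: kweight_gt0.
- by rewrite lt_min hx hy.
- exact: kweight_gt0.
Qed.

Lemma kweight1 k (D : finType) (x : interp ar D) :
  (maxarity Phi < k)%N -> kweight Phi k x = 1.
Proof.
rewrite /kweight /maxarity; elim: Phi => [|p s IH]; rewrite ?big_nil ?expR0 //.
rewrite !big_cons gtn_max => /andP [h1 h2].
have -> : (arity p.1 == k) = false by apply/negbTE; rewrite neq_ltn h1.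
exact: IH.
Qed.

Lemma wmax1 k : (maxarity Phi < k)%N -> wmax Phi k = 1.
Proof.
move=> hk; apply: (big_ind (fun x => x = 1)) => [|x y -> ->|i _].
- exact: kweight1.
- by rewrite maxxx.
- exact: kweight1.
Qed.

Lemma wmin1 k : (maxarity Phi < k)%N -> wmin Phi k = 1.
Proof.
move=> hk; apply: (big_ind (fun x => x = 1)) => [|x y -> ->|i _].
- exact: kweight1.
- by rewrite minxx.
- exact: kweight1.
Qed.

End Weight.

Section Count.
Local Open Scope nat_scope.

Lemma sum1_set (T : finType) (P : pred T) :
  \sum_(i : T | P i) 1 = #|[set i | P i]|.
Proof. by rewrite -sum1_card; apply: eq_bigl => i; rewrite inE. Qed.

Lemma count_mixed n m k :
  #|[set S : {set 'I_(n + m)} | mixed S && (#|S| == k)]|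
    = 'C(n + m, k) - 'C(n, k) - 'C(m, k).
Proof.
case: k => [|k].
  rewrite !bin0 /=; apply/eqP; rewrite cards_eq0; apply/eqP/setP => S.
  rewrite !inE; apply/negbTE; apply/negP => /andP[/andP[HL _] /eqP/cards0_eq Hs].
  by move: HL; rewrite Hs sub0set.
have := @split_sum n m (fun _ => 1) _ (ltn0Sn k).
rewrite !sum1_set card_draws !cards_draws card_ord.
have cL : #|Lset n m| = n by rewrite card_imset ?card_ord //; exact: lshift_inj.
have cR : #|Rset n m| = m by rewrite card_imset ?card_ord //; exact: rshift_inj.
rewrite cL cR => ->; by rewrite -addnA addKn addKn.
Qed.

End Count.

Lemma prod_cst (R : realType) (T : finType) (P : pred T) (x : R) :
  \prod_(i : T | P i) x = x ^+ #|[set i | P i]|.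
Proof. by rewrite -prodr_const; apply: eq_bigl => i; rewrite inE. Qed.

Lemma prod_mixed (R : realType) n m (c : nat -> R) d :
  (forall k, (d < k)%N -> c k = 1) ->
  \prod_(S : {set 'I_(n + m)} | mixed S) c #|S| = Mfac c n m d.
Proof.
move=> hc.
rewrite (partition_big (fun S : {set 'I_(n + m)} => (inord #|S| : 'I_(n + m).+1)) xpredT) //=.
rewrite (eq_bigr (fun k : 'I_(n + m).+1 => c k ^+ ('C(n + m, k) - 'C(n, k) - 'C(m, k)))); last first.
  move=> k _; rewrite (eq_bigl (fun S => mixed S && (#|S| == k))); last first.
    move=> S; congr andb; rewrite -val_eqE /= inordK // ltnS.
    by rewrite -[X in (_ <= X)%N](card_ord (n + m)) max_card.
  rewrite (eq_bigr (fun _ => c k)); last by move=> S /andP[_ /eqP ->].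
  by rewrite prod_cst count_mixed.
rewrite -(big_mkord xpredT (fun k => c k ^+ ('C(n + m, k) - 'C(n, k) - 'C(m, k)))).
rewrite big_ltn // !bin0 subnn sub0n expr0 mul1r /Mfac.
set g := fun k => c k ^+ ('C(n + m, k) - 'C(n, k) - 'C(m, k)).
have ext a b : (1 <= a <= b)%N -> (forall k, (a <= k)%N -> g k = 1) ->
    \prod_(1 <= k < b) g k = \prod_(1 <= k < a) g k.
  move=> /andP[h1 h2] hg; rewrite (@big_cat_nat _ _ _ a) //= [X in _ * X]big_nat_cond [X in _ * X]big1 ?mulr1 //.
  by move=> k /andP[/andP[hk _] _]; exact: hg.
rewrite -(ext _ (maxn (n + m) d).+1) ?(ext d.+1 (maxn (n + m) d).+1) //.
- apply/andP; split => //; rewrite ltnS; exact: leq_maxr.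
- by move=> k hk; rewrite /g hc ?expr1n.
- apply/andP; split => //; rewrite ltnS; exact: leq_maxl.
- move=> k hk; rewrite /g !bin_small ?expr0 //; lia.
Qed.

Section Ext.
Variables (Rel : finType) (ar : Rel -> nat).
Hypothesis har : forall r : Rel, (0 < ar r)%N.
Variables (n m : nat).

Lemma tag_inj (D : finType) r (t t' : (ar r).-tuple D) :
  Tagged (fun r => (ar r).-tuple D) t = Tagged (fun r => (ar r).-tuple D) t' ->
  t = t'.
Proof. exact: (inj_pair2_eq_dec _ (@eq_comparable Rel)). Qed.

Lemma map_atom_inj (D D' : finType) (g : D -> D') :
  injective g -> injective (@map_atom _ ar D D' g).
Proof.
move=> ginj [r t] [r' t'] E.
have er : r = r' := congr1 tag E; subst r'.
move/tag_inj: E => Et; congr existT.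
apply: val_inj; have := congr1 val Et => /=; exact: inj_map.
Qed.

Lemma map_atom_disj (a : atom ar 'I_n) (b : atom ar 'I_m) :
  map_atom (@lshift n m) a != map_atom (@rshift n m) b.
Proof.
apply/eqP; case: a b => [r t] [r' t'] E.
have er : r = r' := congr1 tag E; subst r'.
move/tag_inj: E => Et.
have := congr1 (fun u => tnth u (Ordinal (har r))) Et; rewrite /= !tnth_map.
move/(congr1 val) => /=; have := ltn_ord (tnth t (Ordinal (har r))); move=> h1 h2; move: h1; by rewrite {1}h2 ltnNge leq_addr.
Qed.

Definition lift1 (d : interp ar 'I_n) : interp ar 'I_(n + m) :=
  [ffun a => [exists a', (map_atom (@lshift n m) a' == a) && d a']].
Definition lift2 (d : interp ar 'I_m) : interp ar 'I_(n + m) :=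
  [ffun a => [exists a', (map_atom (@rshift n m) a' == a) && d a']].

Lemma Cext_le (a1 b1 : interp ar 'I_n) (a2 b2 : interp ar 'I_m) : (Cext a1 a2 <= Cext b1 b2)%N.
Proof.
pose d1 : interp ar 'I_n := [ffun a => a1 a (+) b1 a].
pose d2 : interp ar 'I_m := [ffun a => a2 a (+) b2 a].
pose phi (w : interp ar 'I_(n + m)) : interp ar 'I_(n + m) :=
  [ffun a => w a (+) lift1 d1 a (+) lift2 d2 a].
have phiK : involutive phi.
  move=> w; apply/ffunP => a; rewrite !ffunE.
  set A := [exists a', _ && d1 a']; set B := [exists a', _ && d2 a'].
  by case: (w a); case: A; case: B.
rewrite /Cext -(card_imset _ (inv_inj phiK)); apply: subset_leq_card.
apply/subsetP => w' /imsetP [w]; rewrite inE => /andP [/eqP H1 /eqP H2] ->.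
rewrite inE; apply/andP; split; apply/eqP/ffunP => a; rewrite !ffunE.
- have -> : w (map_atom (@lshift n m) a) = a1 a by rewrite -H1 ffunE.
  have -> : [exists a', (map_atom (@lshift n m) a' == map_atom (@lshift n m) a) && d1 a'] = d1 a.
    apply/existsP/idP => [[a' /andP [/eqP /(map_atom_inj (@lshift_inj n m)) -> //]]|h].
    by exists a; rewrite eqxx.
  have -> : [exists a', (map_atom (@rshift n m) a' == map_atom (@lshift n m) a) && d2 a'] = false.
    apply/negbTE/existsP => [[a' /andP [/eqP E _]]].
    by move: (map_atom_disj a a'); rewrite E eqxx.
  by rewrite ffunE; case: (a1 a); case: (b1 a).
- have -> : w (map_atom (@rshift n m) a) = a2 a by rewrite -H2 ffunE.
  have -> : [exists a', (map_atom (@rshift n m) a' == map_atom (@rshift n m) a) && d2 a'] = d2 a.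
    apply/existsP/idP => [[a' /andP [/eqP /(map_atom_inj (@rshift_inj n m)) -> //]]|h].
    by exists a; rewrite eqxx.
  have -> : [exists a', (map_atom (@lshift n m) a' == map_atom (@rshift n m) a) && d1 a'] = false.
    apply/negbTE/existsP => [[a' /andP [/eqP E _]]].
    by move: (map_atom_disj a' a); rewrite E eqxx.
  by rewrite ffunE; case: (a2 a); case: (b2 a).
Qed.

Lemma Cext_eq (a1 b1 : interp ar 'I_n) (a2 b2 : interp ar 'I_m) : Cext a1 a2 = Cext b1 b2.
Proof. by apply/eqP; rewrite eqn_leq !Cext_le. Qed.

End Ext.

Lemma sumr_cst (R : realType) (T : finType) (P : pred T) (x : R) :
  \sum_(i : T | P i) x = x *+ #|[set i | P i]|.
Proof. by rewrite -sumr_const; apply: eq_bigl => i; rewrite inE. Qed.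

Lemma Z_split (Rel : finType) (ar : Rel -> nat)
  (har : forall r : Rel, (0 < ar r)%N) (R : realType) (Phi : mln ar R) n m
  (w1 : interp ar 'I_n) (w2 : interp ar 'I_m) (M : R) :
  \sum_(w : interp ar 'I_(n + m))
     weight Phi (restr (@lshift n m) w) * weight Phi (restr (@rshift n m) w) * M
  = Z Phi n * Z Phi m * (Cext w1 w2)%:R * M.
Proof.
rewrite (partition_big (fun w : interp ar 'I_(n + m) =>
   (restr (@lshift n m) w, restr (@rshift n m) w)) xpredT) //=.
rewrite (eq_bigr (fun p : interp ar 'I_n * interp ar 'I_m =>
   weight Phi p.1 * weight Phi p.2 * M * (Cext w1 w2)%:R)); last first.
  move=> [x y] _ /=.
  rewrite (eq_bigr (fun _ => weight Phi x * weight Phi y * M)); last first.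
    by move=> w /eqP [-> ->].
  rewrite sumr_cst -(Cext_eq har x w1 y w2) -[LHS]mulr_natr.
  congr (_ * _%:R); apply: eq_card => w; rewrite !inE xpair_eqE.
transitivity (\sum_(x : interp ar 'I_n) \sum_(y : interp ar 'I_m)
   weight Phi x * weight Phi y * M * (Cext w1 w2)%:R).
  by rewrite pair_big /=; apply: eq_bigl.
rewrite /Z !mulr_suml; apply: eq_bigr => x _.
rewrite mulr_sumr !mulr_suml; apply: eq_bigr => y _; ring.
Qed.

Unset Implicit Arguments.

Theorem proposition3 (Rel : finType) (ar : Rel -> nat)
    (har : forall r : Rel, (0 < ar r)%N)
    (R : realType) (Phi : mln ar R) (n m : nat)
    (hn : (0 < n)%N) (hm : (0 < m)%N)
    (w1 : interp ar 'I_n) (w2 : interp ar 'I_m) :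
  Mfac (wmin Phi) n m (maxarity Phi) * (Cext w1 w2)%:R * Z Phi n * Z Phi m
    <= Z Phi (n + m) /\
  Z Phi (n + m)
    <= Z Phi n * Z Phi m * (Cext w1 w2)%:R * Mfac (wmax Phi) n m (maxarity Phi).
Proof.
have EMmax := @prod_mixed R n m (wmax Phi) (maxarity Phi) (fun k hk => wmax1 hk).
have EMmin := @prod_mixed R n m (wmin Phi) (maxarity Phi) (fun k hk => wmin1 hk).
split.
- rewrite -EMmin.
  set Mm := \prod_(S : {set 'I_(n + m)} | mixed S) wmin Phi #|S|.
  have -> : Mm * (Cext w1 w2)%:R * Z Phi n * Z Phi m =
    \sum_(w : interp ar 'I_(n + m))
     weight Phi (restr (@lshift n m) w) * weight Phi (restr (@rshift n m) w) * Mm.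
    by rewrite (Z_split har Phi w1 w2); ring.
  rewrite [X in _ <= X]/Z; apply: ler_sum => w _; rewrite (weight_split har).
  apply: ler_wpM2l; first by rewrite mulr_ge0 ?expR_ge0.
  apply: ler_prod => S _; apply/andP; split.
    exact: ltW (wmin_gt0 _ _).
  exact: kweight_ge.
- rewrite -EMmax.
  set Mm := \prod_(S : {set 'I_(n + m)} | mixed S) wmax Phi #|S|.
  rewrite -(Z_split har Phi w1 w2).
  rewrite [X in X <= _]/Z; apply: ler_sum => w _; rewrite (weight_split har).
  apply: ler_wpM2l; first by rewrite mulr_ge0 ?expR_ge0.
  apply: ler_prod => S _; apply/andP; split.
    exact: ltW (kweight_gt0 _ _ _).
  exact: kweight_le.
Qed.
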